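(* Let $\sigma_1,\sigma_2$ be real $2\times2$ matrices with positive definite symmetric parts $\Sigma_i=\frac{\sigma_i+\sigma_i^T}2$, and $d_i=\det\Sigma_i$. Set $$m=(\sigma_2)_{11}(\sigma_1)_{22}+(\sigma_1)_{11}(\sigma_2)_{22}-\tfrac12\big((\sigma_2)_{12}+(\sigma_2)_{21}\big)\big((\sigma_1)_{12}+(\sigma_1)_{21}\big),$$ $$n=\frac1{\sqrt{d_1d_2}}\Big[\det\sigma_1+\det\sigma_2-\tfrac12\big((\sigma_1)_{21}-(\sigma_1)_{12}\big)\big((\sigma_2)_{21}-(\sigma_2)_{12}\big)\Big].$$ Then $$K^{min}(\sigma_1,\sigma_2)=\sqrt{\frac{m+\sqrt{m^2-4d_1d_2}}{2\sqrt{d_1d_2}}\cdot\frac{n+\sqrt{n^2-4}}{2}}.$$ If moreover $\sigma_1,\sigma_2$ are symmetric, then $K^{min}(\sigma_1,\sigma_2)=\max\{\lambda_1^{-1/2},\lambda_2^{1/2}\}$, where $\lambda_1\le\lambda_2$ are the eigenvalues of $\sigma_1^{-1/2}\sigma_2\sigma_1^{-1/2}$.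
   Context: For a real $2\times2$ matrix $\sigma$ with positive definite symmetric part $\sigma^S$, set $$G(\sigma)=\frac{1}{\sqrt{\det\sigma^S}}\begin{pmatrix}\sigma_{22}&-\frac{\sigma_{12}+\sigma_{21}}2\\-\frac{\sigma_{12}+\sigma_{21}}2&\sigma_{11}\end{pmatrix},\quad H(\sigma)=\frac{1}{\sqrt{\det\sigma^S}}\begin{pmatrix}\det\sigma&\frac{\sigma_{21}-\sigma_{12}}2\\\frac{\sigma_{21}-\sigma_{12}}2&1\end{pmatrix}.$$ With $G_i=G(\sigma_i)$, $H_i=H(\sigma_i)$, $K^{min}(\sigma_1,\sigma_2):=\min_{A,B\in SL(2)}\max_{i=1,2}\lambda_{\max}(B^TG_iB)\lambda_{\max}(A^TH_iA)$, where $SL(2)$ is the set of real $2\times 2$ matrices of determinant $1$ and $\lambda_{\max}$ the largest eigenvalue. $\sigma_1^{-1/2}$ denotes the positive definite square root of $\sigma_1^{-1}$. *)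

(* Defs.v *)
(* R is an arbitrary real closed field (rcfType), which
   includes the real numbers; Num.sqrt is the nonnegative square root. *)
From HB Require Import structures.
From mathcomp Require Import all_boot all_order all_algebra.
From Stdlib Require Import ClassicalEpsilon.
Set Implicit Arguments. Unset Strict Implicit. Unset Printing Implicit Defensive.
Import Order.TTheory GRing.Theory Num.Theory.
Local Open Scope ring_scope.

Definition i0 : 'I_2 := ord0.
Definition i1 : 'I_2 := ord_max.

Section Defs.
Variable R : rcfType.

Definition mx2 (a b c d : R) : 'M[R]_2 :=
  \matrix_(i < 2, j < 2)
    if i == i0 then (if j == i0 then a else b) else (if j == i0 then c else d).

Definition sympart (s : 'M[R]_2) : 'M[R]_2 := 2^-1 *: (s + s^T).

Definition posdef (M : 'M[R]_2) : Prop :=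
  forall v : 'rV[R]_2, v != 0 -> 0 < (v *m M *m v^T) ord0 ord0.

Definition SL2 (A : 'M[R]_2) : Prop := \det A = 1.

Definition lambda_max (M : 'M[R]_2) : R :=
  epsilon (inhabits 0)
    (fun l => eigenvalue M l /\ forall a, eigenvalue M a -> a <= l).
Definition lambda_min (M : 'M[R]_2) : R :=
  epsilon (inhabits 0)
    (fun l => eigenvalue M l /\ forall a, eigenvalue M a -> l <= a).

Definition Gm (s : 'M[R]_2) : 'M[R]_2 :=
  (Num.sqrt (\det (sympart s)))^-1 *:
    mx2 (s i1 i1) (- ((s i0 i1 + s i1 i0) / 2))
        (- ((s i0 i1 + s i1 i0) / 2)) (s i0 i0).

Definition Hm (s : 'M[R]_2) : 'M[R]_2 :=
  (Num.sqrt (\det (sympart s)))^-1 *: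
    mx2 (\det s) ((s i1 i0 - s i0 i1) / 2)
        ((s i1 i0 - s i0 i1) / 2) 1.

Definition Kval (s1 s2 A B : 'M[R]_2) : R :=
  Num.max (lambda_max (B^T *m Gm s1 *m B) * lambda_max (A^T *m Hm s1 *m A))
          (lambda_max (B^T *m Gm s2 *m B) * lambda_max (A^T *m Hm s2 *m A)).

Definition is_Kmin (s1 s2 : 'M[R]_2) (k : R) : Prop :=
  (exists A B, SL2 A /\ SL2 B /\ Kval s1 s2 A B = k) /\
  (forall A B, SL2 A -> SL2 B -> k <= Kval s1 s2 A B).

Definition inv_sqrt_mx (s : 'M[R]_2) : 'M[R]_2 :=
  epsilon (inhabits 0)
    (fun S : 'M[R]_2 => S^T = S /\ posdef S /\ S *m S = invmx s).

End Defs.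

(* Main.v *)
Require Import Defs.
From HB Require Import structures.
From mathcomp Require Import all_boot all_order all_algebra.
From mathcomp Require Import ring lra.
From Stdlib Require Import ClassicalEpsilon.
Import Order.TTheory GRing.Theory Num.Theory.
Local Open Scope ring_scope.
Set Implicit Arguments. Unset Strict Implicit.

Lemma det2 (T : comNzRingType) (M : 'M[T]_2) :
  \det M = M i0 i0 * M i1 i1 - M i0 i1 * M i1 i0.
Proof.
rewrite (expand_det_row _ ord0) !big_ord_recl big_ord0 /cofactor !det_mx11 !mxE /=.
rewrite /bump /= expr0 expr1. 
have -> : lift (lift ord0 ord0) 0 = i0 :> 'I_2 by apply/val_inj.
rewrite /i0 /i1. 
have -> : (ord_max : 'I_2) = lift ord0 ord0 by apply/val_inj.
rewrite addr0 mul1r mulN1r mulrN. done.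
Qed.



Section M2.
Variable R : rcfType.
Implicit Types (a b c d e f g h : R) (M : 'M[R]_2).


Lemma mx2E a b c d i j : mx2 a b c d i j =
  if i == i0 then (if j == i0 then a else b) else (if j == i0 then c else d).
Proof. by rewrite mxE. Qed.

Lemma ord2P (i : 'I_2) : i = i0 \/ i = i1.
Proof. by case: i => [[|[|//]] Hi]; [left|right]; apply/val_inj. Qed.

Lemma mx2_eta M : M = mx2 (M i0 i0) (M i0 i1) (M i1 i0) (M i1 i1).
Proof.
apply/matrixP => i j; rewrite mxE.
by case: (ord2P i) => ->; case: (ord2P j) => ->.
Qed.

Lemma mx2_00 a b c d : mx2 a b c d i0 i0 = a. Proof. by rewrite mxE. Qed.
Lemma mx2_01 a b c d : mx2 a b c d i0 i1 = b. Proof. by rewrite mxE. Qed.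
Lemma mx2_10 a b c d : mx2 a b c d i1 i0 = c. Proof. by rewrite mxE. Qed.
Lemma mx2_11 a b c d : mx2 a b c d i1 i1 = d. Proof. by rewrite mxE. Qed.

Lemma mx2_mul a b c d e f g h :
  mx2 a b c d *m mx2 e f g h = mx2 (a*e+b*g) (a*f+b*h) (c*e+d*g) (c*f+d*h).
Proof.
apply/matrixP => i j; rewrite !mxE !big_ord_recl big_ord0 !mxE addr0.
by case: (ord2P i) => ->; case: (ord2P j) => ->.
Qed.

Lemma mx2_tr a b c d : (mx2 a b c d)^T = mx2 a c b d.
Proof.
apply/matrixP => i j; rewrite !mxE.
by case: (ord2P i) => ->; case: (ord2P j) => ->.
Qed.

Lemma mx2_scale k a b c d : k *: mx2 a b c d = mx2 (k*a) (k*b) (k*c) (k*d).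
Proof.
apply/matrixP => i j; rewrite !mxE.
by case: (ord2P i) => ->; case: (ord2P j) => ->.
Qed.

Lemma mx2_add a b c d e f g h :
  mx2 a b c d + mx2 e f g h = mx2 (a+e) (b+f) (c+g) (d+h).
Proof.
apply/matrixP => i j; rewrite !mxE.
by case: (ord2P i) => ->; case: (ord2P j) => ->.
Qed.

Lemma mx2_det a b c d : \det (mx2 a b c d) = a * d - b * c.
Proof.
rewrite (expand_det_row _ ord0) !big_ord_recl big_ord0 /cofactor !det_mx11 !mxE /=.
rewrite /bump /= expr0 expr1; ring.
Qed.


Lemma eig2 (M : 'M[R]_2) l :
  eigenvalue M l = (l ^+ 2 - (M i0 i0 + M i1 i1) * l + (M i0 i0 * M i1 i1 - M i0 i1 * M i1 i0) == 0).
Proof.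
rewrite eigenvalue_root_char /root /char_poly det2 /char_poly_mx !mxE.
rewrite /i0 /i1 /= !hornerE /=. apply/eqP/eqP => H; rewrite -H; ring.
Qed.

Lemma roots2 (t dl S x : R) : S ^+ 2 = t ^+ 2 - 4 * dl -> 0 <= S ->
  x ^+ 2 - t * x + dl = 0 -> (t - S) / 2 <= x <= (t + S) / 2.
Proof.
move=> HS S0 Hx.
have : (x - (t - S)/2) * (x - (t+S)/2) = 0.
  rewrite -Hx. have -> : dl = (t^+2 - S^+2)/4 by rewrite HS; field.
  by field.
move/eqP; rewrite mulf_eq0 => /orP [] /eqP H; apply/andP; split; lra.
Qed.

Lemma lmax2 (M : 'M[R]_2) :
  let t := M i0 i0 + M i1 i1 in
  let dl := M i0 i0 * M i1 i1 - M i0 i1 * M i1 i0 in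
  0 <= t ^+ 2 - 4 * dl ->
  lambda_max M = (t + Num.sqrt (t ^+ 2 - 4 * dl)) / 2 /\
  lambda_min M = (t - Num.sqrt (t ^+ 2 - 4 * dl)) / 2.
Proof.
move=> t dl Hd.
set S := Num.sqrt _.
have S0 : 0 <= S by apply: sqrtr_ge0.
have HS : S ^+ 2 = t ^+ 2 - 4 * dl by rewrite sqr_sqrtr.
have eigP x : eigenvalue M x -> (t - S) / 2 <= x <= (t + S) / 2.
  rewrite eig2 -/t -/dl => /eqP H; exact: (roots2 HS S0 H).
have eig1 : eigenvalue M ((t + S) / 2).
  rewrite eig2; apply/eqP; rewrite -/t -/dl.
  have -> : dl = (t^+2 - S^+2)/4 by rewrite HS; field.
  by field.
have eig2' : eigenvalue M ((t - S) / 2).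
  rewrite eig2; apply/eqP; rewrite -/t -/dl.
  have -> : dl = (t^+2 - S^+2)/4 by rewrite HS; field.
  by field.
split.
- rewrite /lambda_max.
  set P := (fun l => _).
  have [] : P (epsilon (inhabits 0) P).
    apply: epsilon_spec; exists ((t+S)/2); split => // a /eigP /andP[]//.
  move=> /eigP /andP [_ H1] H2; apply/eqP; rewrite eq_le H1 H2 //.
- rewrite /lambda_min.
  set P := (fun l => _).
  have [] : P (epsilon (inhabits 0) P).
    apply: epsilon_spec; exists ((t-S)/2); split => // a /eigP /andP[]//.
  move=> /eigP /andP [H1 _] H2; apply/eqP; rewrite eq_le H1 H2 //.
Qed.

Definition phi (t : R) := (t + Num.sqrt (t ^+ 2 - 4)) / 2.

Lemma le_sq_le (w v : R) : w ^+ 2 <= v ^+ 2 -> 0 <= v -> w <= v.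
Proof. move=> H1 H2; nra. Qed.

Lemma sq_ge4 (t : R) : 2 <= t -> 0 <= t ^+ 2 - 4.
Proof. move=> h; nra. Qed.

Lemma T_ge2 a b c x y z : 0 < a -> a * c - b ^+ 2 = 1 -> 0 < x -> x * z - y ^+ 2 = 1 ->
  2 <= c * x - 2 * b * y + a * z.
Proof.
move=> a0 ha x0 hx.
have H : a * x * (c * x - 2 * b * y + a * z) = x ^+ 2 + a ^+ 2 + (b * x - a * y) ^+ 2.
  apply/eqP; rewrite -subr_eq0.
  have -> : a * x * (c * x - 2 * b * y + a * z) - (x ^+ 2 + a ^+ 2 + (b * x - a * y) ^+ 2)
     = x^+2*(a*c - b^+2 - 1) + a^+2*(x*z - y^+2 - 1) by ring.
  by rewrite ha hx subrr !mulr0 addr0.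
have ax : 0 < a * x by apply: mulr_gt0.
have : a * x * 2 <= a * x * (c * x - 2 * b * y + a * z).
  rewrite H; have := sqr_ge0 (x - a); have := sqr_ge0 (b * x - a * y); nra.
by rewrite ler_pM2l.
Qed.

Lemma phi_ge1 t : 2 <= t -> 1 <= phi t.
Proof. move=> h; rewrite /phi; have := sqrtr_ge0 (t^+2 - 4); lra. Qed.

Lemma phi_sq t : 2 <= t -> phi t * phi t - t * phi t + 1 = 0.
Proof.
move=> h; rewrite /phi. have H : Num.sqrt (t^+2 - 4) ^+ 2 = t^+2 - 4.
  by rewrite sqr_sqrtr //; nra.
move: H; set S := Num.sqrt _ => H.
apply/eqP; rewrite -subr_eq0. 
have -> : (t + S) / 2 * ((t + S) / 2) - t * ((t + S) / 2) + 1 - 0 = (S^+2 - (t^+2 - 4))/4 by field.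
by rewrite H subrr mul0r.
Qed.

Lemma scal_lb a b c x y z : 0 < a -> a * c - b ^+ 2 = 1 -> 0 < x -> x * z - y ^+ 2 = 1 ->
  phi (c * x - 2 * b * y + a * z) <= phi (a + c) * phi (x + z).
Proof.
move=> a0 ha x0 hx.
set T := c * x - 2 * b * y + a * z.
have T2 : 2 <= T by apply: T_ge2.
have s2 : 2 <= a + c.
  have c0 : 0 < c by nra.
  apply: le_sq_le; first by have := sqr_ge0 (a - c); nra. lra.
have u2 : 2 <= x + z.
  have z0 : 0 < z by nra.
  apply: le_sq_le; first by have := sqr_ge0 (x - z); nra. lra.
set s := a + c. set u := x + z.
have hS : Num.sqrt (s^+2 - 4) ^+ 2 = (a - c)^+2 + 4 * b^+2.
  rewrite sqr_sqrtr; last by apply: sq_ge4.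
  apply/eqP; rewrite -subr_eq0 /s.
  have -> : (a + c) ^+ 2 - 4 - ((a - c) ^+ 2 + 4 * b ^+ 2) = 4 * (a * c - b^+2 - 1) by ring.
  by rewrite ha subrr mulr0.
have hU : Num.sqrt (u^+2 - 4) ^+ 2 = (x - z)^+2 + 4 * y^+2.
  rewrite sqr_sqrtr; last by apply: sq_ge4.
  apply/eqP; rewrite -subr_eq0 /u.
  have -> : (x + z) ^+ 2 - 4 - ((x - z) ^+ 2 + 4 * y ^+ 2) = 4 * (x * z - y^+2 - 1) by ring.
  by rewrite hx subrr mulr0.
have hV : Num.sqrt (T^+2 - 4) ^+ 2 = T^+2 - 4 by rewrite sqr_sqrtr //; apply: sq_ge4.
have S0 := sqrtr_ge0 (s^+2 - 4). have U0 := sqrtr_ge0 (u^+2 - 4).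
have V0 := sqrtr_ge0 (T^+2 - 4).
rewrite /phi.
move: hS hU hV S0 U0 V0.
set S1 := Num.sqrt (s^+2 - 4). set U1 := Num.sqrt (u^+2 - 4). set V := Num.sqrt (T^+2 - 4).
move=> hS hU hV S0 U0 V0.
(* Cauchy Schwarz *)
have CS : 2 * T - s * u <= S1 * U1.
  apply: le_sq_le; last by apply: mulr_ge0.
  have -> : 2 * T - s * u = - ((a - c) * (x - z) + (2 * b) * (2 * y)) by rewrite /T /s /u; ring.
  rewrite exprMn hS hU sqrrN.
  have -> : ((a - c) * (x - z) + 2 * b * (2 * y)) ^+ 2 = ((a - c) ^+ 2 + 4 * b ^+ 2) * ((x - z) ^+ 2 + 4 * y ^+ 2) - ((a-c)*(2*y) - (2*b)*(x-z))^+2 by ring.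
  rewrite lerBlDr lerDl; exact: sqr_ge0.
set p := (s + S1) / 2. set p' := (s - S1) / 2.
set q := (u + U1) / 2. set q' := (u - U1) / 2.
have hS' : S1 ^+ 2 = s ^+ 2 - 4 by rewrite /S1 sqr_sqrtr //; apply: sq_ge4.
have hU' : U1 ^+ 2 = u ^+ 2 - 4 by rewrite /U1 sqr_sqrtr //; apply: sq_ge4.
have pp : p * p' = 1.
  apply/eqP; rewrite -subr_eq0.
  have -> : p * p' - 1 = (s^+2 - 4 - S1^+2)/4 by rewrite /p /p'; field.
  by rewrite hS' subrr mul0r.
have qq : q * q' = 1.
  apply/eqP; rewrite -subr_eq0.
  have -> : q * q' - 1 = (u^+2 - 4 - U1^+2)/4 by rewrite /q /q'; field.
  by rewrite hU' subrr mul0r.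
have sum : p * q + p' * q' = (s * u + S1 * U1) / 2 by rewrite /p /p' /q /q'; field.
have s2' : 2 <= s := s2. have u2' : 2 <= u := u2.
have p1 : 1 <= p by rewrite /p; lra.
have q1 : 1 <= q by rewrite /q; lra.
have X1 : 1 <= p * q by nra.
have XX : p * q * (p' * q') = 1.
  by rewrite mulrACA pp qq mulr1.
have K : p * q * T <= p * q * (p * q) + 1.
  have : T <= p * q + p' * q' by rewrite sum; lra.
  move=> H; rewrite -XX -mulrDr; apply: ler_wpM2l => //; lra.
have : V <= 2 * (p * q) - T.
  apply: le_sq_le; last first.
    have : p' * q' <= 1 by nra.
    move=> H; have : T <= p * q + p' * q' by rewrite sum; lra.
    lra.
  rewrite hV. nra.
rewrite -/p -/q. lra.
Qed.

Definition sym1 (G : 'M[R]_2) := G i1 i0 = G i0 i1 /\ 0 < G i0 i0 /\ \det G = 1.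
Definition Tr (G1 G2 : 'M[R]_2) :=
  G1 i1 i1 * G2 i0 i0 - 2 * G1 i0 i1 * G2 i0 i1 + G1 i0 i0 * G2 i1 i1.

Lemma sym1_eta G : sym1 G -> exists a b c, G = mx2 a b b c /\ 0 < a /\ a * c - b ^+ 2 = 1.
Proof.
move=> [h1 [h2 h3]]; exists (G i0 i0), (G i0 i1), (G i1 i1); split.
  by rewrite {1}(mx2_eta G) h1.
by split=> //; rewrite -h3 det2 h1 expr2.
Qed.

Lemma tr_ge2 a b c : 0 < a -> a * c - b ^+ 2 = 1 -> 2 <= a + c.
Proof.
move=> a0 ha; have c0 : 0 < c by nra.
apply: le_sq_le; first by have := sqr_ge0 (a - c); nra. lra.
Qed.

Lemma lmax_sym1 G : sym1 G -> lambda_max G = phi (G i0 i0 + G i1 i1).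
Proof.
move=> HG; have [a [b [c [-> [a0 ha]]]]] := sym1_eta HG.
rewrite !mx2_00 !mx2_11.
have Hd : 0 <= (a + c) ^+ 2 - 4 * (a * c - b * b).
  rewrite -expr2 ha mulr1; apply: sq_ge4; exact: tr_ge2 a0 ha.
have := @lmax2 (mx2 a b b c).
rewrite !mx2_00 !mx2_11 !mx2_01 !mx2_10 => /(_ Hd) [-> _].
by rewrite /phi -expr2 ha mulr1.
Qed.

Lemma sym1_congr G B : sym1 G -> \det B = 1 -> sym1 (B^T *m G *m B).
Proof.
move=> HG hB; have [a [b [c [-> [a0 ha]]]]] := sym1_eta HG.
move: hB; rewrite (mx2_eta B) mx2_det.
set p := B i0 i0; set q := B i0 i1; set r := B i1 i0; set s := B i1 i1 => hB.
rewrite mx2_tr !mx2_mul /sym1 mx2_det ?mx2_00 ?mx2_01 ?mx2_10 ?mx2_11.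
split; first by ring.
split.
  have : (p, r) != (0, 0).
    apply/eqP => [[hp hr]]; move: hB; rewrite hp hr !mul0r mulr0 subr0 => /eqP.
    by rewrite eq_sym oner_eq0.
  case: (boolP (r == 0)) => [/eqP hr _ | hr _].
    rewrite hr; have : p != 0 by apply/eqP => hp; move: hB; rewrite hp hr !mul0r !mulr0 subr0 => /eqP; rewrite eq_sym oner_eq0.
    move=> hp; have hp2 : 0 < p * p by rewrite -expr2 lt_def sqrf_eq0 hp sqr_ge0.
    nra.
  have hr2 : 0 < r * r by rewrite -expr2 lt_def sqrf_eq0 hr sqr_ge0.
  have := sqr_ge0 (a * p + b * r). nra.
match goal with |- ?L = _ => have -> : L = (a*c - b^+2) * (p*s - q*r)^+2 by ring end.
by rewrite ha hB expr1n mulr1.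
Qed.

Lemma Tr_congr G1 G2 B : sym1 G1 -> sym1 G2 -> \det B = 1 ->
  Tr (B^T *m G1 *m B) (B^T *m G2 *m B) = Tr G1 G2.
Proof.
move=> H1 H2 hB.
have [a [b [c [-> [a0 ha]]]]] := sym1_eta H1.
have [x [y [z [-> [x0 hx]]]]] := sym1_eta H2.
move: hB; rewrite (mx2_eta B) mx2_det.
set p := B i0 i0; set q := B i0 i1; set r := B i1 i0; set s := B i1 i1 => hB.
rewrite mx2_tr !mx2_mul /Tr ?mx2_00 ?mx2_01 ?mx2_10 ?mx2_11.
match goal with |- ?L = _ => have -> : L = (c * x - 2 * b * y + a * z) * (p*s - q*r)^+2 by ring end.
by rewrite hB expr1n mulr1.
Qed.

Lemma lower_bound G1 G2 B : sym1 G1 -> sym1 G2 -> \det B = 1 ->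
  phi (Tr G1 G2) <= lambda_max (B^T *m G1 *m B) * lambda_max (B^T *m G2 *m B).
Proof.
move=> H1 H2 hB.
rewrite -(Tr_congr H1 H2 hB).
have K1 := sym1_congr H1 hB. have K2 := sym1_congr H2 hB.
rewrite (lmax_sym1 K1) (lmax_sym1 K2).
move: K1 K2; set P := B^T *m G1 *m B; set Q := B^T *m G2 *m B => K1 K2.
have [a [b [c [-> [a0 ha]]]]] := sym1_eta K1.
have [x [y [z [-> [x0 hx]]]]] := sym1_eta K2.
rewrite /Tr ?mx2_00 ?mx2_01 ?mx2_10 ?mx2_11.
exact: scal_lb.
Qed.


Lemma sym1_c a b c : 0 < a -> a * c - b ^+ 2 = 1 -> 0 < c.
Proof. move=> a0 ha; nra. Qed.

Lemma trace_form a b c u v t :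
  let M := (mx2 u 0 v t)^T *m mx2 a b b c *m mx2 u 0 v t in
  M i0 i0 + M i1 i1 = a * u ^+ 2 + 2 * b * u * v + c * (v ^+ 2 + t ^+ 2).
Proof. by rewrite /= mx2_tr !mx2_mul ?mx2_00 ?mx2_01 ?mx2_10 ?mx2_11; ring. Qed.

Lemma achieve G1 G2 : sym1 G1 -> sym1 G2 ->
  let w := Num.sqrt (Tr G1 G2 + 2) in
  exists B, \det B = 1 /\ lambda_max (B^T *m G1 *m B) = phi w /\
                         lambda_max (B^T *m G2 *m B) = phi w.
Proof.
move=> H1 H2.
have [a [b [c [E1 [a0 ha]]]]] := sym1_eta H1.
have [x [y [z [E2 [x0 hx]]]]] := sym1_eta H2.
have c0 := sym1_c a0 ha. have z0 := sym1_c x0 hx.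
rewrite /Tr E1 E2 ?mx2_00 ?mx2_01 ?mx2_10 ?mx2_11.
have T2 := T_ge2 a0 ha x0 hx.
move: T2; set T := c * x - 2 * b * y + a * z => T2.
set w : R := Num.sqrt (T + 2).
have w0 : 0 < w by rewrite /w sqrtr_gt0; lra.
have hw : w ^+ 2 = T + 2 by rewrite /w sqr_sqrtr //; lra.
set p := (c + z) / w. set q := - (b + y) / w.
have p0 : 0 < p by rewrite /p; apply: divr_gt0 => //; lra.
set sp : R := Num.sqrt p.
have sp0 : 0 < sp by rewrite /sp sqrtr_gt0.
have hsp : sp ^+ 2 = p by rewrite /sp sqr_sqrtr // ltW.
have spn : sp != 0 by rewrite gt_eqF.
have hr : (q ^+ 2 + 1) / p = (a + x) / w.
  apply/eqP; rewrite -subr_eq0; apply/eqP.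
  have wn : w != 0 by rewrite gt_eqF.
  have czn : c + z != 0 by rewrite gt_eqF //; lra.
  have -> : (q ^+ 2 + 1) / p - (a + x) / w =
    ((w ^+ 2 - (T + 2)) + (2 - (a * c - b ^+ 2) - (x * z - y ^+ 2))) / (w * (c + z)).
    rewrite /p /q /T. field. by rewrite czn wn.
  apply/eqP; rewrite mulf_eq0; apply/orP; left; apply/eqP; lra.
exists (mx2 sp 0 (q / sp) (1 / sp)).
have dB : \det (mx2 sp 0 (q / sp) (1 / sp)) = 1.
  by rewrite mx2_det mul0r subr0; field.
split => //.
have wn : w != 0 by rewrite gt_eqF.
have trq a' b' c' : a' * sp^+2 + 2*b'*sp*(q/sp) + c'*((q/sp)^+2 + (1/sp)^+2) =
    a' * p + 2*b'*q + c' * ((q^+2+1)/p).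
  by rewrite -hsp; field; rewrite spn.
have K1 : sym1 (mx2 a b b c) by rewrite -E1.
have K2 : sym1 (mx2 x y y z) by rewrite -E2.
split.
- rewrite (lmax_sym1 (sym1_congr K1 dB)) trace_form trq hr; congr phi.
  apply/eqP; rewrite -subr_eq0.
  have -> : a * p + 2 * b * q + c * ((a + x) / w) - w = ((2*(a*c - b^+2) + T) - w^+2)/w.
    by rewrite /p /q /T; field; rewrite wn.
  rewrite mulf_eq0; apply/orP; left; apply/eqP; lra.
- rewrite (lmax_sym1 (sym1_congr K2 dB)) trace_form trq hr; congr phi.
  apply/eqP; rewrite -subr_eq0.
  have -> : x * p + 2 * y * q + z * ((a + x) / w) - w = ((2*(x*z - y^+2) + T) - w^+2)/w.
    by rewrite /p /q /T; field; rewrite wn.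
  rewrite mulf_eq0; apply/orP; left; apply/eqP; lra.
Qed.

Lemma phi_char (mu T : R) : 1 <= mu -> mu ^+ 2 - T * mu + 1 = 0 -> phi T = mu.
Proof.
move=> m1 hm.
have E : T ^+ 2 - 4 = (2 * mu - T) ^+ 2.
  apply/eqP; rewrite -subr_eq0; apply/eqP.
  have -> : T ^+ 2 - 4 - (2 * mu - T) ^+ 2 = - 4 * (mu ^+ 2 - T * mu + 1) by ring.
  by rewrite hm mulr0.
have P : 0 <= 2 * mu - T.
  have : (2 * mu - T) * mu = mu ^+ 2 - 1.
    apply/eqP; rewrite -subr_eq0; apply/eqP.
    have -> : (2 * mu - T) * mu - (mu ^+ 2 - 1) = mu ^+ 2 - T * mu + 1 by ring.
    exact: hm.
  nra.
by rewrite /phi E sqrtr_sqr ger0_norm //; field.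
Qed.

Lemma phi_sqrt (T : R) : 2 <= T -> phi (Num.sqrt (T + 2)) ^+ 2 = phi T.
Proof.
move=> T2; set w := Num.sqrt (T + 2).
have hw : w ^+ 2 = T + 2 by rewrite /w sqr_sqrtr //; lra.
have w2 : 2 <= w.
  apply: le_sq_le; last by apply: sqrtr_ge0.
  rewrite hw; lra.
have l1 := phi_ge1 w2. have hl := phi_sq w2.
symmetry; apply: phi_char.
  by rewrite expr2; nra.
set l := phi w.
have -> : T = w ^+ 2 - 2 by lra.
have -> : (l ^+ 2) ^+ 2 - (w ^+ 2 - 2) * l ^+ 2 + 1 = (l * l - w * l + 1) * (l * l + w * l + 1) by ring.
by rewrite hl mul0r.
Qed.

Definition vec2 (x y : R) : 'rV[R]_2 := \row_j (if j == i0 then x else y).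

Lemma qform a b c d x y :
  (vec2 x y *m mx2 a b c d *m (vec2 x y)^T) ord0 ord0 = a * x^+2 + (b + c) * x * y + d * y^+2.
Proof.
rewrite !mxE !big_ord_recl big_ord0 !mxE !big_ord_recl !big_ord0 !mxE /=.
ring.
Qed.

Lemma vec2_neq0 x y : (x != 0) || (y != 0) -> vec2 x y != 0.
Proof.
move=> /orP [] H; apply/negP => /eqP E.
  by move: (congr1 (fun v : 'rV[R]_2 => v ord0 i0) E); rewrite !mxE eqxx; apply/eqP.
move: (congr1 (fun v : 'rV[R]_2 => v ord0 i1) E); rewrite !mxE.
have -> : (i1 == i0) = false by [].
by apply/eqP.
Qed.

Lemma posdef_mx2 a h d : posdef (mx2 a h h d) -> 0 < a /\ 0 < d /\ 0 < a * d - h ^+ 2.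
Proof.
move=> P.
have Pa := P _ (@vec2_neq0 1 0 (introT orP (or_introl (oner_neq0 R)))).
have Pd := P _ (@vec2_neq0 0 1 (introT orP (or_intror (oner_neq0 R)))).
rewrite !qform in Pa Pd.
have a0 : 0 < a by move: Pa; rewrite expr1n expr0n /= => Pa; lra.
split => //; split; first by move: Pd; rewrite expr1n expr0n /= => Pd; lra.
have an : a != 0 by rewrite gt_eqF.
have Ph := P _ (@vec2_neq0 (- h) a (introT orP (or_intror an))).
rewrite qform in Ph.
have : 0 < a * (a * d - h ^+ 2).
  have -> : a * (a * d - h ^+ 2) = a * (-h)^+2 + (h+h)*(-h)*a + d*a^+2 by ring.
  exact: Ph.
by rewrite pmulr_rgt0.
Qed.

Lemma vec2_eta (v : 'rV[R]_2) : v = vec2 (v ord0 i0) (v ord0 i1).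
Proof.
apply/matrixP => i j; rewrite !mxE (ord1 i); case: (ord2P j) => -> //=.
Qed.

Lemma mx2_posdef a h d : 0 < a -> 0 < a * d - h ^+ 2 -> posdef (mx2 a h h d).
Proof.
move=> a0 hd v v0.
move: v0; rewrite (vec2_eta v) qform; set x := v ord0 i0; set y := v ord0 i1 => v0.
have [y0|yn] := eqVneq y 0.
  have xn : x != 0.
    apply/negP => /eqP x0; move: v0; rewrite x0 y0; apply/negP; rewrite negbK.
    apply/eqP/matrixP => i j; rewrite !mxE; by case: (j == i0).
  rewrite y0 expr0n /=. have x2 : 0 < x ^+ 2 by rewrite lt_def sqrf_eq0 xn sqr_ge0.
  have := mulr_gt0 a0 x2. lra.
have y2 : 0 < y ^+ 2 by rewrite lt_def sqrf_eq0 yn sqr_ge0.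
have : 0 < a * (a * x ^+ 2 + (h + h) * x * y + d * y ^+ 2).
  have -> : a * (a * x ^+ 2 + (h + h) * x * y + d * y ^+ 2) = (a * x + h * y) ^+ 2 + (a * d - h ^+ 2) * y ^+ 2 by ring.
  have := sqr_ge0 (a * x + h * y); have := mulr_gt0 hd y2; lra.
by rewrite pmulr_rgt0.
Qed.

Lemma sympart_mx2 (s : 'M[R]_2) : sympart s =
  mx2 (s i0 i0) ((s i0 i1 + s i1 i0)/2) ((s i0 i1 + s i1 i0)/2) (s i1 i1).
Proof.
apply/matrixP => i j; rewrite /sympart !mxE.
case: (ord2P i) => ->; case: (ord2P j) => -> /=; rewrite ?eqxx /=; by field.
Qed.


Lemma pd_facts (s : 'M[R]_2) : posdef (sympart s) ->
  0 < s i0 i0 /\ 0 < s i1 i1 /\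
  \det (sympart s) = s i0 i0 * s i1 i1 - ((s i0 i1 + s i1 i0)/2) ^+ 2 /\
  0 < \det (sympart s).
Proof.
rewrite sympart_mx2 => /posdef_mx2 [h1 [h2 h3]].
by rewrite mx2_det -expr2.
Qed.

Lemma sym1_Gm (s : 'M[R]_2) : posdef (sympart s) -> sym1 (Gm s).
Proof.
move=> /pd_facts [a0 [e0 [hD D0]]].
rewrite /Gm; move: D0 hD; set D := \det (sympart s) => D0 hD.
set k := (Num.sqrt D)^-1.
have sq0 : 0 < Num.sqrt D by rewrite sqrtr_gt0.
have k0 : 0 < k by rewrite /k invr_gt0.
have hk : k ^+ 2 * D = 1.
  by rewrite /k exprVn sqr_sqrtr ?mulVf // ?gt_eqF // ltW.
rewrite mx2_scale /sym1 mx2_det ?mx2_00 ?mx2_01 ?mx2_10 ?mx2_11.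
split => //; split; first exact: mulr_gt0.
rewrite -[RHS]hk hD; by field.
Qed.

Lemma sym1_Hm (s : 'M[R]_2) : posdef (sympart s) -> sym1 (Hm s).
Proof.
move=> /pd_facts [a0 [e0 [hD D0]]].
rewrite /Hm; move: D0 hD; set D := \det (sympart s) => D0 hD.
set k := (Num.sqrt D)^-1.
have sq0 : 0 < Num.sqrt D by rewrite sqrtr_gt0.
have k0 : 0 < k by rewrite /k invr_gt0.
have hk : k ^+ 2 * D = 1.
  by rewrite /k exprVn sqr_sqrtr ?mulVf // ?gt_eqF // ltW.
have ds : \det s - ((s i1 i0 - s i0 i1) / 2) ^+ 2 = D.
  rewrite hD det2; by field.
rewrite mx2_scale /sym1 mx2_det ?mx2_00 ?mx2_01 ?mx2_10 ?mx2_11.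
split => //; split.
  apply: mulr_gt0 => //.
  have := sqr_ge0 ((s i1 i0 - s i0 i1) / 2); lra.
rewrite -[RHS]hk -ds; by field.
Qed.

Lemma Tr_ge2 G1 G2 : sym1 G1 -> sym1 G2 -> 2 <= Tr G1 G2.
Proof.
move=> H1 H2.
have [a [b [c [E1 [a0 ha]]]]] := sym1_eta H1.
have [x [y [z [E2 [x0 hx]]]]] := sym1_eta H2.
rewrite /Tr E1 E2 ?mx2_00 ?mx2_01 ?mx2_10 ?mx2_11; exact: T_ge2.
Qed.

Lemma lmax_ge1 P : sym1 P -> 1 <= lambda_max P.
Proof.
move=> HP; rewrite (lmax_sym1 HP); apply: phi_ge1.
have [a [b [c [E1 [a0 ha]]]]] := sym1_eta HP.
rewrite E1 ?mx2_00 ?mx2_11; exact: tr_ge2 a0 ha.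
Qed.

Lemma sqrt_le_max (k x1 x2 y1 y2 : R) : 0 <= k -> 0 <= x1 -> 0 <= x2 -> 0 <= y1 -> 0 <= y2 ->
  k <= (x1 * y1) * (x2 * y2) -> Num.sqrt k <= Num.max (x1 * y1) (x2 * y2).
Proof.
move=> k0 h1 h2 h3 h4 hk.
set M := Num.max _ _.
have M1 : x1 * y1 <= M by rewrite /M le_max lexx.
have M2 : x2 * y2 <= M by rewrite /M le_max lexx orbT.
have M0 : 0 <= M by apply: le_trans M1; apply: mulr_ge0.
have : k <= M ^+ 2.
  apply: (le_trans hk); rewrite expr2; apply: ler_pM => //; apply: mulr_ge0 => //.
move=> /ler_wsqrtr; rewrite sqrtr_sqr ger0_norm //.
Qed.

Lemma sqrt_ge2 (T : R) : 2 <= T -> 2 <= Num.sqrt (T + 2).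
Proof.
move=> T2; apply: le_sq_le; last by apply: sqrtr_ge0.
rewrite sqr_sqrtr; lra.
Qed.

Lemma part1_gen (s1 s2 : 'M[R]_2) : posdef (sympart s1) -> posdef (sympart s2) ->
  is_Kmin s1 s2 (Num.sqrt (phi (Tr (Gm s1) (Gm s2)) * phi (Tr (Hm s1) (Hm s2)))).
Proof.
move=> P1 P2.
have G1 := sym1_Gm P1. have G2 := sym1_Gm P2.
have H1 := sym1_Hm P1. have H2 := sym1_Hm P2.
have TG := Tr_ge2 G1 G2. have TH := Tr_ge2 H1 H2.
split.
- have [B [dB [e1 e2]]] := achieve G1 G2.
  have [A [dA [f1 f2]]] := achieve H1 H2.
  exists A, B; split => //; split => //.
  rewrite /Kval e1 e2 f1 f2 maxxx -(phi_sqrt TG) -(phi_sqrt TH) -exprMn sqrtr_sqr ger0_norm //.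
  by apply: mulr_ge0; apply: le_trans (phi_ge1 (sqrt_ge2 _)).
- move=> A B dA dB.
  have LG := lower_bound G1 G2 dB. have LH := lower_bound H1 H2 dA.
  have x1 := lmax_ge1 (sym1_congr G1 dB). have x2 := lmax_ge1 (sym1_congr G2 dB).
  have y1 := lmax_ge1 (sym1_congr H1 dA). have y2 := lmax_ge1 (sym1_congr H2 dA).
  rewrite /Kval; apply: sqrt_le_max.
  + by apply: mulr_ge0; [apply: le_trans (phi_ge1 TG) | apply: le_trans (phi_ge1 TH)].
  + lra.
  + lra.
  + lra.
  + lra.
  + rewrite [X in _ <= X]mulrACA; apply: ler_pM => //; [apply: le_trans (phi_ge1 TG) | apply: le_trans (phi_ge1 TH)] => //.
Qed.

Lemma Tr_G (s1 s2 : 'M[R]_2) : posdef (sympart s1) -> posdef (sympart s2) ->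
  Tr (Gm s1) (Gm s2) = (Num.sqrt (\det (sympart s1) * \det (sympart s2)))^-1 *
     (s2 i0 i0 * s1 i1 i1 + s1 i0 i0 * s2 i1 i1
           - 2^-1 * (s2 i0 i1 + s2 i1 i0) * (s1 i0 i1 + s1 i1 i0)).
Proof.
move=> /pd_facts [_ [_ [_ D1]]] /pd_facts [_ [_ [_ D2]]].
rewrite sqrtrM ?ltW // invfM /Tr /Gm !mx2_scale ?mx2_00 ?mx2_01 ?mx2_10 ?mx2_11.
field; by rewrite !gt_eqF ?sqrtr_gt0.
Qed.

Lemma Tr_H (s1 s2 : 'M[R]_2) : posdef (sympart s1) -> posdef (sympart s2) ->
  Tr (Hm s1) (Hm s2) = (Num.sqrt (\det (sympart s1) * \det (sympart s2)))^-1 *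
           (\det s1 + \det s2
            - 2^-1 * (s1 i1 i0 - s1 i0 i1) * (s2 i1 i0 - s2 i0 i1)).
Proof.
move=> /pd_facts [_ [_ [_ D1]]] /pd_facts [_ [_ [_ D2]]].
rewrite sqrtrM ?ltW // invfM /Tr /Hm !mx2_scale ?mx2_00 ?mx2_01 ?mx2_10 ?mx2_11.
field; by rewrite !gt_eqF ?sqrtr_gt0.
Qed.

Lemma Phi_eq (m e : R) : 0 < e ->
  (m + Num.sqrt (m ^+ 2 - 4 * e)) / (2 * Num.sqrt e) = phi ((Num.sqrt e)^-1 * m).
Proof.
move=> e0; set D := Num.sqrt e.
have D0 : 0 < D by rewrite /D sqrtr_gt0.
have hD : D ^+ 2 = e by rewrite /D sqr_sqrtr // ltW.
rewrite /phi.
have -> : (D^-1 * m) ^+ 2 - 4 = D^-1 ^+ 2 * (m ^+ 2 - 4 * e).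
  rewrite -hD; field; by rewrite gt_eqF.
rewrite sqrtrM ?sqr_ge0 // sqrtr_sqr ger0_norm ?invr_ge0 ?ltW //.
field; by rewrite gt_eqF.
Qed.

Lemma inv_cmp (r : R) : 0 < r -> (1 <= r -> r^-1 <= r) /\ (r < 1 -> r <= r^-1).
Proof.
move=> r0; have ri : 0 < r^-1 by rewrite invr_gt0.
have rr : r * r^-1 = 1 by rewrite mulfV // gt_eqF.
split => h; nra.
Qed.

Lemma phi_r (r : R) : 0 < r -> phi (r + r^-1) = Num.max r r^-1.
Proof.
move=> r0; have rn : r != 0 by rewrite gt_eqF.
have [c1 c2] := inv_cmp r0.
case: (lerP 1 r) => h.
- rewrite max_l; last by apply: c1.
  apply: phi_char => //; by field.
- rewrite max_r; last by apply: c2.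
  apply: phi_char; first by rewrite invf_ge1 // ltW.
  by field.
Qed.

Lemma fin_alg (r p : R) : 0 < r -> 1 <= p ->
  Num.max (Num.sqrt (r / p))^-1 (Num.sqrt (r * p)) = Num.sqrt (p * phi (r + r^-1)).
Proof.
move=> r0 p1; have p0 : 0 < p by lra.
have [c1 c2] := inv_cmp r0.
have ri : 0 < r^-1 by rewrite invr_gt0.
have rr : r * r^-1 = 1 by rewrite mulfV // gt_eqF.
rewrite phi_r // -sqrtrV ?divr_ge0 ?ltW // invf_div.
case: (lerP 1 r) => h.
- rewrite (max_l (c1 h)).
  rewrite max_r ?[p * r]mulrC //; apply: ler_wsqrtr.
  rewrite ler_pdivrMr //; have : 1 <= r * r by nra. nra.
- rewrite (max_r (c2 h)).
  rewrite max_l; first by rewrite mulrC.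
  apply: ler_wsqrtr; rewrite ler_pdivlMr //.
  have : r * r <= 1 by nra. nra.
Qed.
Lemma lm_r (r T : R) : 0 < r -> 2 <= T ->
  (r * T + Num.sqrt ((r * T) ^+ 2 - 4 * r ^+ 2)) / 2 = r * phi T /\
  (r * T - Num.sqrt ((r * T) ^+ 2 - 4 * r ^+ 2)) / 2 = r / phi T.
Proof.
move=> r0 T2.
have -> : (r * T) ^+ 2 - 4 * r ^+ 2 = r ^+ 2 * (T ^+ 2 - 4) by ring.
rewrite sqrtrM ?sqr_ge0 // sqrtr_sqr ger0_norm ?ltW //.
have p1 := phi_ge1 T2. have hp := phi_sq T2.
split; first by rewrite /phi; field.
have pn : phi T != 0 by rewrite gt_eqF //; lra.
apply/eqP; rewrite -subr_eq0; apply/eqP.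
have -> : (r * T - r * Num.sqrt (T ^+ 2 - 4)) / 2 - r / phi T =
   (r * (phi T * (T - Num.sqrt (T ^+ 2 - 4)) / 2 - 1)) / phi T by field.
have hS : Num.sqrt (T ^+ 2 - 4) ^+ 2 = T ^+ 2 - 4 by rewrite sqr_sqrtr // sq_ge4.
have -> : phi T * (T - Num.sqrt (T ^+ 2 - 4)) / 2 - 1 = (T^+2 - Num.sqrt (T ^+ 2 - 4) ^+ 2 - 4) / 4.
  by rewrite /phi; field.
rewrite hS (_ : T ^+ 2 - (T ^+ 2 - 4) - 4 = 0); last by ring.
by rewrite !(mul0r, mulr0).
Qed.

Lemma sym_entry (s : 'M[R]_2) : s^T = s -> s i1 i0 = s i0 i1.
Proof. by move=> H; rewrite -{1}H mxE. Qed.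

Lemma sympart_sym (s : 'M[R]_2) : s^T = s -> sympart s = s.
Proof.
move=> H; rewrite /sympart H; apply/matrixP => i j; rewrite !mxE; by field.
Qed.

Lemma id2 : (1%:M : 'M[R]_2) = mx2 1 0 0 1.
Proof.
apply/matrixP => i j; rewrite !mxE.
by case: (ord2P i) => ->; case: (ord2P j) => ->.
Qed.

Lemma inv2 (a b e : R) : a * e - b ^+ 2 != 0 ->
  invmx (mx2 a b b e) = let D := a * e - b ^+ 2 in mx2 (e/D) (-b/D) (-b/D) (a/D).
Proof.
move=> Dn /=.
have uA : mx2 a b b e \in unitmx by rewrite unitmxE unitfE mx2_det -expr2.
have H : mx2 a b b e *m mx2 (e / (a * e - b ^+ 2)) (- b / (a * e - b ^+ 2))
   (- b / (a * e - b ^+ 2)) (a / (a * e - b ^+ 2)) = 1%:M.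
  by rewrite mx2_mul id2; congr mx2; field.
by rewrite -[invmx _]mulmx1 -H mulmxA mulVmx // mul1mx.
Qed.

Lemma isq_spec (a b e : R) : 0 < a -> 0 < a * e - b ^+ 2 ->
  let S := inv_sqrt_mx (mx2 a b b e) in
  S^T = S /\ S *m S = invmx (mx2 a b b e).
Proof.
move=> a0 d0 S.
rewrite /S /inv_sqrt_mx.
set P := (fun S0 : 'M_2 => _).
suff : P (epsilon (inhabits 0) P) by move=> [h1 [_ h3]].
apply: epsilon_spec.
have dn : a * e - b ^+ 2 != 0 by rewrite gt_eqF.
rewrite /P inv2 //=.
set D := a * e - b ^+ 2.
set x := e / D. set y := - b / D. set z := a / D.
have e0 : 0 < e by nra.
have x0 : 0 < x by rewrite /x divr_gt0.
have z0 : 0 < z by rewrite /z divr_gt0.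
have hdel : x * z - y ^+ 2 = D^-1 by rewrite /x /y /z /D; field.
have Di : 0 < D^-1 by rewrite invr_gt0.
set dl := Num.sqrt (x * z - y ^+ 2).
have dl0 : 0 < dl by rewrite /dl sqrtr_gt0 hdel.
have hdl : dl ^+ 2 = x * z - y ^+ 2 by rewrite /dl sqr_sqrtr // hdel ltW.
set w := Num.sqrt (x + z + 2 * dl).
have w0 : 0 < w by rewrite /w sqrtr_gt0; lra.
have hw : w ^+ 2 = x + z + 2 * dl by rewrite /w sqr_sqrtr //; lra.
have wn : w != 0 by rewrite gt_eqF.
exists (mx2 ((x + dl) / w) (y / w) (y / w) ((z + dl) / w)).
split; first by rewrite mx2_tr.
split.
  apply: mx2_posdef; first by apply: divr_gt0 => //; lra.
  have -> : (x + dl) / w * ((z + dl) / w) - (y / w) ^+ 2 =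
    ((x * z - y ^+ 2) + dl * (x + z) + dl ^+ 2) / w ^+ 2 by field.
  rewrite -hdl hw; have -> : dl ^+ 2 + dl * (x + z) + dl ^+ 2 = dl * (x + z + 2 * dl) by ring.
  by rewrite mulfK ?gt_eqF //; lra.
rewrite mx2_mul; congr mx2.
- apply/eqP; rewrite -subr_eq0; apply/eqP.
  have -> : (x + dl) / w * ((x + dl) / w) + y / w * (y / w) - x =
     (dl ^+ 2 - (x * z - y ^+ 2) + x * (x + z + 2 * dl - w ^+ 2)) / w ^+ 2 by field.
  by rewrite hdl hw !subrr mulr0 addr0 mul0r.
- apply/eqP; rewrite -subr_eq0; apply/eqP.
  have -> : (x + dl) / w * (y / w) + y / w * ((z + dl) / w) - y =
     (y * (x + z + 2 * dl - w ^+ 2)) / w ^+ 2 by field.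
  by rewrite hw subrr mulr0 mul0r.
- apply/eqP; rewrite -subr_eq0; apply/eqP.
  have -> : y / w * ((x + dl) / w) + (z + dl) / w * (y / w) - y =
     (y * (x + z + 2 * dl - w ^+ 2)) / w ^+ 2 by field.
  by rewrite hw subrr mulr0 mul0r.
- apply/eqP; rewrite -subr_eq0; apply/eqP.
  have -> : y / w * (y / w) + (z + dl) / w * ((z + dl) / w) - z =
     (dl ^+ 2 - (x * z - y ^+ 2) + z * (x + z + 2 * dl - w ^+ 2)) / w ^+ 2 by field.
  by rewrite hdl hw !subrr mulr0 addr0 mul0r.
Qed.

Lemma tr2 (M : 'M[R]_2) : \tr M = M i0 i0 + M i1 i1.
Proof.
rewrite /mxtrace !big_ord_recl big_ord0 addr0 /i0 /i1; congr (_ + _).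
by have -> : lift ord0 ord0 = ord_max :> 'I_2 by apply/val_inj.
Qed.

Lemma part2_val (s1 s2 : 'M[R]_2) : posdef (sympart s1) -> posdef (sympart s2) ->
  s1^T = s1 -> s2^T = s2 ->
  let M := inv_sqrt_mx s1 *m s2 *m inv_sqrt_mx s1 in
  Num.max (Num.sqrt (lambda_min M))^-1 (Num.sqrt (lambda_max M)) =
  Num.sqrt (phi (Tr (Gm s1) (Gm s2)) * phi (Tr (Hm s1) (Hm s2))).
Proof.
move=> P1 P2 S1 S2 M.
have TGe := Tr_G P1 P2. have THe := Tr_H P1 P2.
have TG2 := Tr_ge2 (sym1_Gm P1) (sym1_Gm P2).
move: TGe THe TG2 (pd_facts P1) (pd_facts P2).
rewrite /M (sympart_sym S1) (sympart_sym S2).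
rewrite (mx2_eta s1) (mx2_eta s2) !mx2_00 !mx2_01 !mx2_10 !mx2_11 (sym_entry S1) (sym_entry S2).
set a := s1 i0 i0; set b := s1 i0 i1; set e := s1 i1 i1.
set x := s2 i0 i0; set y := s2 i0 i1; set z := s2 i1 i1.
set TG := Tr _ _; set TH := Tr _ _.
rewrite !mx2_det => TGe THe TG2 [a0 [e0 [_ d1]]] [x0 [z0 [_ d2]]].
have d1' : 0 < a * e - b ^+ 2 by rewrite expr2.
have [ST SS] := isq_spec a0 d1'.
move: ST SS; set S := inv_sqrt_mx _ => ST SS.
set N := S *m mx2 x y y z *m S.
have NT : N^T = N by rewrite /N !trmx_mul ST mx2_tr mulmxA.
have NS := sym_entry NT.
set D1 := a * e - b * b. set D2 := x * z - y * y.
have trN : N i0 i0 + N i1 i1 = (x * e - 2 * y * b + z * a) / D1.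
  rewrite -tr2 /N mxtrace_mulC mulmxA SS mxtrace_mulC inv2 ?gt_eqF //= mx2_mul tr2.
  rewrite ?mx2_00 ?mx2_11 /D1 expr2; by field; rewrite gt_eqF.
have detN : N i0 i0 * N i1 i1 - N i0 i1 * N i1 i0 = D2 / D1.
  rewrite -det2 /N !det_mulmx mulrAC -det_mulmx SS det_inv !mx2_det -/D1 -/D2.
  by rewrite mulrC.
set u1 := Num.sqrt D1. set u2 := Num.sqrt D2.
have u10 : 0 < u1 by rewrite /u1 sqrtr_gt0.
have u20 : 0 < u2 by rewrite /u2 sqrtr_gt0.
have hu1 : u1 ^+ 2 = D1 by rewrite /u1 sqr_sqrtr // ltW.
have hu2 : u2 ^+ 2 = D2 by rewrite /u2 sqr_sqrtr // ltW.
move: TGe THe; rewrite (sqrtrM D2 (ltW d1)) -/u1 -/u2 => TGe THe.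
set r := u2 / u1.
have r0 : 0 < r by rewrite /r divr_gt0.
have u1n : u1 != 0 by rewrite gt_eqF.
have u2n : u2 != 0 by rewrite gt_eqF.
have trr : N i0 i0 + N i1 i1 = r * TG.
  rewrite trN TGe /r -hu1; field; by rewrite ?u1n ?u2n.
have detr : N i0 i0 * N i1 i1 - N i0 i1 * N i1 i0 = r ^+ 2.
  rewrite detN /r -hu1 -hu2; field; by rewrite ?u1n ?u2n.
have THr : TH = r + r^-1.
  rewrite THe /r -/D1 -/D2 -hu1 -hu2; field; by rewrite ?u1n ?u2n.
have disc : 0 <= (N i0 i0 + N i1 i1) ^+ 2 - 4 * (N i0 i0 * N i1 i1 - N i0 i1 * N i1 i0).
  rewrite NS; have -> : (N i0 i0 + N i1 i1) ^+ 2 - 4 * (N i0 i0 * N i1 i1 - N i0 i1 * N i0 i1)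
     = (N i0 i0 - N i1 i1) ^+ 2 + 4 * N i0 i1 ^+ 2 by ring.
  by apply: addr_ge0; [apply: sqr_ge0 | apply: mulr_ge0 => //; apply: sqr_ge0].
have [-> ->] := lmax2 disc.
rewrite trr detr.
have [-> ->] := lm_r r0 TG2.
rewrite THr fin_alg //; exact: phi_ge1.
Qed.

End M2.

Theorem mainTheorem13 (R : rcfType) (s1 s2 : 'M[R]_2) :
  posdef (sympart s1) -> posdef (sympart s2) ->
  let d1 := \det (sympart s1) in
  let d2 := \det (sympart s2) in
  let m := s2 i0 i0 * s1 i1 i1 + s1 i0 i0 * s2 i1 i1
           - 2^-1 * (s2 i0 i1 + s2 i1 i0) * (s1 i0 i1 + s1 i1 i0) in
  let n := (Num.sqrt (d1 * d2))^-1 *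
           (\det s1 + \det s2
            - 2^-1 * (s1 i1 i0 - s1 i0 i1) * (s2 i1 i0 - s2 i0 i1)) in
  is_Kmin s1 s2
    (Num.sqrt ((m + Num.sqrt (m ^+ 2 - 4 * d1 * d2)) / (2 * Num.sqrt (d1 * d2))
               * ((n + Num.sqrt (n ^+ 2 - 4)) / 2)))
  /\
  (s1^T = s1 -> s2^T = s2 ->
   let M := inv_sqrt_mx s1 *m s2 *m inv_sqrt_mx s1 in
   is_Kmin s1 s2
     (Num.max (Num.sqrt (lambda_min M))^-1 (Num.sqrt (lambda_max M)))).
Proof.
move=> P1 P2 d1 d2 m n.
split.
- have [_ [_ [_ D1]]] := pd_facts P1. have [_ [_ [_ D2]]] := pd_facts P2.
  have e0 : 0 < d1 * d2 by apply: mulr_gt0.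
  rewrite -[4 * d1 * d2]mulrA Phi_eq // -(Tr_G P1 P2).
  have -> : (n + Num.sqrt (n ^+ 2 - 4)) / 2 = phi n by [].
  rewrite /n -(Tr_H P1 P2).
  exact: part1_gen.
- move=> S1 S2 M.
  rewrite (part2_val P1 P2 S1 S2).
  exact: part1_gen.
Qed.
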